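(* Let $A$ be a $d\times d$ integer matrix of determinant $\pm1$ with $\mathrm{spec}(A)=\{1\}$, and for $k>0$ let $F^{(k)}=P(\mathrm{im}(A^k-I))\subset\mathbb Z^d$. Then $F^{(k)}=F^{(1)}$ for all $k>0$. Consequently, if $\tau$ is a twisted skew product with group component $\mathbb Z^d$ and twisting matrix $A$, then for all $k>0$ the $k$-th iterate of the Fried quotient of $\tau$ equals the Fried quotient of $\tau^k$: $(\tau_{F^{(1)}})^k=(\tau^k)_{F^{(k)}}$.
   Context: A subgroup $\Gamma\subset\mathbb Z^d$ is pure if $\mathbb Z^d/\Gamma$ is torsion-free; the purification $P(X)$ of a subset $X$ is the smallest pure subgroup containing $X$. Twisted skew product: over a countable state Markov shift $(\Sigma,\sigma)$ (bi-infinite sequences allowed by a $\{0,1\}$ transition matrix on a countable state set, $\sigma$ the left shift), $\tau(s,n)=(\sigma s,An+h(s))$ on $\Sigma\times\mathbb Z^d$ with $h$ depending only on $(s_0,s_1)$; $\tau^k$ is a twisted skew product with twisting matrix $A^k$. For an $A$-invariant subgroup $\Gamma$, $\tau_\Gamma(s,n+\Gamma)=(\sigma s,An+h(s)+\Gamma)$. The Fried quotient of a twisted skew product with twisting $\Psi$ is $\tau_F$ with $F=P(\mathrm{im}(\Psi-\mathrm{id}))$. *)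

(* Defs.v *)
From HB Require Import structures.
From mathcomp Require Import all_boot all_order all_algebra all_field.
Set Implicit Arguments. Unset Strict Implicit. Unset Printing Implicit Defensive.
Import Order.TTheory GRing.Theory Num.Theory.
Local Open Scope ring_scope.

(* Z^d is represented by integer column vectors 'cV[int]_d; matrices act on
   the left.  Subsets / subgroups of Z^d are Prop-valued predicates. *)
Definition Zd (d : nat) := 'cV[int]_d.

Definition is_subgroup d (G : Zd d -> Prop) : Prop :=
  G 0 /\ (forall x y, G x -> G y -> G (x - y)).

Definition pure d (G : Zd d -> Prop) : Prop :=
  is_subgroup G /\ (forall (m : int) (v : Zd d), m != 0 -> G (m *: v) -> G v).

Definition purification d (X : Zd d -> Prop) : Zd d -> Prop :=
  fun v => forall G, pure G -> (forall x, X x -> G x) -> G v.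

Definition im_mx d (M : 'M[int]_d) : Zd d -> Prop :=
  fun v => exists w : Zd d, v = M *m w.

Definition Fk d (A : 'M[int]_d) (k : nat) : Zd d -> Prop :=
  purification (im_mx (A ^+ k - 1%:M)).

Definition markov (S : countType) (T : S -> S -> bool) (s : int -> S) : Prop :=
  forall i : int, T (s i) (s (i + 1)).

Definition shift (S : Type) (s : int -> S) : int -> S := fun i => s (i + 1).

Record tsp (S : Type) (d : nat) := TSP {
  base : (int -> S) -> (int -> S);
  twist : 'M[int]_d;
  cocycle : (int -> S) -> Zd d }.

Definition tsp_map S d (t : tsp S d) (x : (int -> S) * Zd d) : (int -> S) * Zd d :=
  (base t x.1, twist t *m x.2 + cocycle t x.1).

Definition twisted_sp S d (A : 'M[int]_d) (h : S -> S -> Zd d) : tsp S d :=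
  TSP (@shift S) A (fun s => h (s 0) (s 1)).

Fixpoint tsp_pow S d (t : tsp S d) (k : nat) : tsp S d :=
  match k with
  | 0 => TSP id 1%:M (fun _ => 0)
  | k'.+1 => let u := tsp_pow t k' in
      TSP (fun s => base t (base u s)) (twist t *m twist u)
          (fun s => twist t *m cocycle u s + cocycle t (base u s))
  end.

Definition coset d (G : Zd d -> Prop) (n : Zd d) : Zd d -> Prop :=
  fun m => G (m - n).

Definition quot S d (t : tsp S d) (G : Zd d -> Prop)
    (x : (int -> S) * (Zd d -> Prop)) : (int -> S) * (Zd d -> Prop) :=
  (base t x.1, fun m => exists n, x.2 n /\ G (m - (twist t *m n + cocycle t x.1))).

Definition fried_group S d (t : tsp S d) : Zd d -> Prop :=
  purification (im_mx (twist t - 1%:M)).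

Definition fried_quot S d (t : tsp S d) := quot t (fried_group t).

(* Main.v *)
Require Import Defs.
From HB Require Import structures.
From mathcomp Require Import all_boot all_order all_algebra all_field.
From Stdlib Require Import FunctionalExtensionality PropExtensionality.
Import Order.TTheory GRing.Theory Num.Theory.
Local Open Scope ring_scope.
Lemma nilpC n' (B : 'M[algC]_n'.+1)
  (hspec : forall l : algC, eigenvalue B l <-> l = 1) :
  exists e, (B - 1) ^+ e = 0.
Proof.
have [r Dp] := closed_field_poly_normal (char_poly B).
rewrite (monicP (char_poly_monic B)) scale1r in Dp.
have r1 : forall z, z \in r -> z = 1.
  move=> z zr; apply/hspec; rewrite eigenvalue_root_char Dp root_prod_XsubC //.
exists (size r).
have := Cayley_Hamilton B; rewrite Dp rmorph_prod /= => <-.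
elim: r r1 {Dp} => [|z r IH] r1; first by rewrite big_nil expr0.
rewrite big_cons exprS IH; last by move=> y yr; apply: r1; rewrite inE yr orbT.
by rewrite rmorphB /= horner_mx_X horner_mx_C (r1 z) ?inE ?eqxx.
Qed.
Lemma x n' (A : 'M[int]_n'.+1) e : map_mx (intr : int -> algC) ((A - 1)^+e) = (map_mx intr A - 1)^+e.
Proof. by rewrite rmorphXn rmorphB rmorph1. Qed.
Lemma y n' (M : 'M[int]_n') : map_mx (intr : int -> algC) M = 0 -> M = 0.
Proof. move=> h; apply/matrixP => i j; move/matrixP: h => /(_ i j); rewrite !mxE.
move/eqP; rewrite intr_eq0 => /eqP //. Qed.
Section P1.
Variables (d : nat) (A : 'M[int]_d).
Local Notation N := (A - 1 : 'M[int]_d).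
Fixpoint U k : 'M[int]_d := if k is k'.+1 then U k' + A ^+ k' else 0.
Fixpoint W k : 'M[int]_d := if k is k'.+1 then W k' + U k' else 0.

Lemma mDr (x y z : 'M[int]_d) : x * (y + z) = x * y + x * z. Proof. exact: mulrDr. Qed.
Lemma US k : U k.+1 = U k + A ^+ k. Proof. by []. Qed.
Lemma WS k : W k.+1 = W k + U k. Proof. by []. Qed.
Lemma U0 : U 0 = 0. Proof. by []. Qed.
Lemma W0 : W 0 = 0. Proof. by []. Qed.
Lemma NA : GRing.comm N A.
Proof. apply: commr_sym; apply: commrB; [exact: commr_refl | exact: commr1]. Qed.

Lemma U_a k : N * U k = A ^+ k - 1.
Proof.
elim: k => [|k IH]; first by rewrite U0 mulr0 expr0 subrr.
rewrite US mDr IH.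
have -> : (A - 1) * A ^+ k = A ^+ k.+1 - A ^+ k by rewrite mulrBl mul1r exprS.
by rewrite addrC addrA subrK.
Qed.

Lemma commNU k : GRing.comm N (U k).
Proof. elim: k => [|k IH]; [exact: commr0 | rewrite US; apply: commrD => //; exact: commrX NA]. Qed.

Lemma commNW k : GRing.comm N (W k).
Proof. elim: k => [|k IH]; [exact: commr0 | rewrite WS; apply: commrD => //; exact: commNU]. Qed.

Lemma U_b k : U k = k%:R + N * W k.
Proof.
elim: k => [|k IH]; first by rewrite U0 W0 mulr0 addr0.
rewrite US WS.
have hA : A ^+ k = N * U k + 1 by rewrite U_a subrK.
rewrite hA {1}IH mDr mulrS.
by rewrite -!addrA [RHS]addrC -!addrA.
Qed.

Lemma inv_U k e : N ^+ e = 0 -> exists S, U k * S = (k ^ e)%:R.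
Proof.
move=> He.
set X := N * W k.
have HX : X ^+ e = 0 by rewrite /X exprMn_comm ?He ?mul0r //; exact: commNW.
exists (\sum_(i < e) (k%:R : 'M[int]_d) ^+ (e.-1 - i) * (- X) ^+ i).
have := subrXX_comm e (commr_sym (commr_nat (- X) k)).
rewrite exprNn HX mulr0 subr0 opprK -U_b => <-.
by rewrite natrX.
Qed.
End P1.

Lemma sg_add d (G : Zd d -> Prop) : is_subgroup G -> forall x y, G x -> G y -> G (x + y).
Proof.
move=> [G0 GB] x y Gx Gy.
have := GB x (0 - y) Gx (GB _ _ G0 Gy). by rewrite sub0r opprK.
Qed.

Arguments sg_add {d G}.
Lemma quot_coset S d (t : tsp S d) (G : Zd d -> Prop) (sg : is_subgroup G)
  (inv : forall v, G v -> G (twist t *m v)) s n :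
  quot t G (s, coset G n) = (base t s, coset G (twist t *m n + cocycle t s)).
Proof.
rewrite /quot /=; congr pair.
apply: functional_extensionality => m; apply: propositional_extensionality.
rewrite /coset; split.
- move=> [n' [h1 h2]].
  have := sg_add sg _ _ h2 (inv _ h1).
  congr G; rewrite mulmxBr.
  by rewrite !opprD !addrA (addrAC _ (- cocycle t s)) subrK addrAC.
- move=> h; exists n; split => //; rewrite subrr; exact: sg.1.
Qed.

Lemma iter_quot S d (t : tsp S d) (G : Zd d -> Prop) (sg : is_subgroup G)
  (inv : forall v, G v -> G (twist t *m v)) s n k :
  iter k (quot t G) (s, coset G n) =
  (base (tsp_pow t k) s,
   coset G (twist (tsp_pow t k) *m n + cocycle (tsp_pow t k) s)).
Proof.
elim: k => [|k IH]; first by rewrite /= mul1mx addr0.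
rewrite iterS IH quot_coset //=.
by rewrite mulmxDr mulmxA addrA.
Qed.

Lemma twist_pow S d (t : tsp S d) k : twist (tsp_pow t k) = twist t ^+ k.
Proof. elim: k => [|k IH] //=. by rewrite IH exprS. Qed.

Lemma pur_sg d (X : Zd d -> Prop) : is_subgroup (purification X).
Proof.
split; first by move=> G [[G0 _] _] _.
move=> x y Fx Fy G pG sX; exact: pG.1.2 _ _ (Fx G pG sX) (Fy G pG sX).
Qed.

Lemma pur_inv d (A : 'M[int]_d) v :
  purification (im_mx (A - 1%:M)) v -> purification (im_mx (A - 1%:M)) (A *m v).
Proof.
move=> Fv G pG sX.
have -> : A *m v = v + (A - 1%:M) *m v by rewrite mulmxBl mul1mx addrC subrK.
apply: (sg_add pG.1); first exact: Fv.
by apply: sX; exists v.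
Qed.

Lemma pur_invX d (A : 'M[int]_d) k v :
  purification (im_mx (A - 1%:M)) v -> purification (im_mx (A - 1%:M)) (A ^+ k *m v).
Proof.
move=> Fv; elim: k => [|k IH]; first by rewrite expr0 mul1mx.
by rewrite exprS -mulmxE -mulmxA; apply: pur_inv.
Qed.

Lemma nilpZ d (A : 'M[int]_d)
  (hspec : forall l : algC, eigenvalue (map_mx intr A) l <-> l = 1) :
  exists e, (A - 1) ^+ e = 0.
Proof.
case: d A hspec => [|n'] A hspec.
  by exists 0%N; apply/matrixP => i; case: i.
have [e He] := @nilpC _ _ hspec.
exists e; apply: y; by rewrite x He.
Qed.

Lemma Fk_eq d (A : 'M[int]_d) (hn : exists e, (A - 1) ^+ e = 0) k (hk : (0 < k)%N) v :
  Fk A k v <-> Fk A 1 v.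
Proof.
have [e He] := hn.
split.
- move=> H G pG sX; apply: H => // z [w ->].
  have -> : (A ^+ k - 1%:M) *m w = (A - 1%:M) *m (@U d A k *m w).
    by rewrite mulmxA mulmxE U_a.
  by apply: sX; exists (@U d A k *m w).
- move=> H G pG sX; apply: H => // z [w ->].
  have [S0 HS] := @inv_U d A k e He.
  set c : int := (k ^ e)%:R.
  have c0 : c != 0 by rewrite /c pnatr_eq0 expn_eq0 negb_and -lt0n hk.
  apply: (pG.2 c) => //.
  have -> : c *: ((A ^+ 1 - 1%:M) *m w) = (A ^+ k - 1%:M) *m (S0 *m w).
    rewrite expr1 mulmxA mulmxE -(U_a d A k) -mulrA HS scalemxAl.
    congr (_ *m _); rewrite mulr_natr /c scaler_nat //.
  by apply: sX; exists (S0 *m w).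
Qed.

Theorem mainTheorem12 (d : nat) (A : 'M[int]_d)
  (hdet : \det A = 1 \/ \det A = -1)
  (hspec : forall l : algC, eigenvalue (map_mx intr A) l <-> l = 1) :
  (forall k : nat, (0 < k)%N -> forall v : Zd d, Fk A k v <-> Fk A 1 v) /\
  (forall (S : countType) (T : S -> S -> bool) (h : S -> S -> Zd d) (k : nat),
     (0 < k)%N ->
     forall (s : int -> S), markov T s -> forall n : Zd d,
       iter k (fried_quot (twisted_sp A h))
              (s, coset (fried_group (twisted_sp A h)) n)
       = fried_quot (tsp_pow (twisted_sp A h) k)
              (s, coset (fried_group (tsp_pow (twisted_sp A h) k)) n)).
Proof.
have hn := @nilpZ d A hspec.
have P1 := @Fk_eq d A hn.
split => // S T h k hk s _ n.
have EF : fried_group (tsp_pow (twisted_sp A h) k) = fried_group (twisted_sp A h).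
  apply: functional_extensionality => v; apply: propositional_extensionality.
  rewrite /fried_group twist_pow /=.
  exact: (P1 k hk v).
rewrite /fried_quot EF.
rewrite (@iter_quot _ _ _ _ (pur_sg _ _)); last by move=> v; exact: pur_inv.
rewrite (@quot_coset _ _ _ _ (pur_sg _ _)) //.
by move=> v; rewrite twist_pow /=; exact: pur_invX.
Qed.
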